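(* Let $c\in\Sigma$ and let $T[k,l]$ ($k\le l$) be a string such that $T[k,l-1]$ is right-maximal and $T[l]=c$ (i.e. $T[k,l]$ is a $c$-right-extension of the right-maximal string $T[k,l-1]$). Then there exist a $c$-run break $i$ and $i'\in\{i-1,i\}$ with $\mathrm{BWT}_r[i']=c$ such that $T[k,l]$ is a suffix of $T[\mathrm{text}(i')-\mathrm{LCP}_r[i],\,\mathrm{text}(i')]$.
   Context: Let $T=T[1,n]\in\Sigma^n$, $n\ge2$, over $\Sigma=\{1,\dots,\sigma\}$, with $T[1]=\$$ the smallest character, occurring only at position 1, and every character of $\Sigma$ occurring in $T$. $T[i,j]=T[i]\cdots T[j]$ (empty if $i>j$). A substring $T[i,j]$ ($i-1\le j$) is right-maximal if it is a suffix of $T$ or there exist distinct $a,b\in\Sigma$ with both $T[i,j]a$ and $T[i,j]b$ occurring in $T$. Let $\overleftarrow T=T[n]\cdots T[1]$; $\mathrm{SA}_r$ is the suffix array of $\overleftarrow T$; $\mathrm{LCP}_r[1]=0$ and for $i\ge2$, $\mathrm{LCP}_r[i]$ is the length of the longest common prefix of the suffixes of $\overleftarrow T$ starting at $\mathrm{SA}_r[i-1]$ and $\mathrm{SA}_r[i]$; $\mathrm{BWT}_r[i]=\overleftarrow T[\mathrm{SA}_r[i]-1]$ if $\mathrm{SA}_r[i]>1$, else $\overleftarrow T[n]$. $\mathrm{text}(i)=n-\mathrm{SA}_r[i]+1$. For $i\in[2,n]$ and $c\in\Sigma$, $i$ is a $c$-run break if $\mathrm{BWT}_r[i-1]\neq\mathrm{BWT}_r[i]$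 and $c\in\{\mathrm{BWT}_r[i-1],\mathrm{BWT}_r[i]\}$. *)

(* Defs.v *)
(* Strings are [seq nat] over Sigma = {1,...,sigma};
   positions are 1-indexed as in the paper. *)
From mathcomp Require Import all_boot.
Set Implicit Arguments. Unset Strict Implicit. Unset Printing Implicit Defensive.

Definition chr (T : seq nat) (j : nat) : nat := nth 0 T j.-1.

(* T[i,j] = T[i] ... T[j]  (empty if i > j); intended for i >= 1 *)
Definition substr (T : seq nat) (i j : nat) : seq nat := drop i.-1 (take j T).

Fixpoint lexle (s t : seq nat) : bool :=
  match s, t with
  | [::], _ => true
  | _ :: _, [::] => false
  | a :: s', b :: t' => (a < b) || ((a == b) && lexle s' t')
  end.

Fixpoint lcp (s t : seq nat) : nat :=
  match s, t with
  | a :: s', b :: t' => if a == b then (lcp s' t').+1 else 0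
  | _, _ => 0
  end.

Definition Trev (T : seq nat) : seq nat := rev T.

Definition rsuf (T : seq nat) (p : nat) : seq nat := drop p.-1 (Trev T).

Definition SAr_list (T : seq nat) : seq nat :=
  sort (fun p q => lexle (rsuf T p) (rsuf T q)) (iota 1 (size T)).

Definition SAr (T : seq nat) (i : nat) : nat := nth 0 (SAr_list T) i.-1.

Definition LCPr (T : seq nat) (i : nat) : nat :=
  if i <= 1 then 0 else lcp (rsuf T (SAr T i.-1)) (rsuf T (SAr T i)).

Definition BWTr (T : seq nat) (i : nat) : nat :=
  if 1 < SAr T i then chr (Trev T) (SAr T i).-1
  else chr (Trev T) (size T).

Definition text (T : seq nat) (i : nat) : nat := size T - SAr T i + 1.

Definition right_maximal (sigma : nat) (T u : seq nat) : Prop :=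
  suffix u T \/
  exists a b, [/\ 1 <= a <= sigma, 1 <= b <= sigma, a != b,
                  infix (rcons u a) T & infix (rcons u b) T].

Definition run_break (T : seq nat) (c i : nat) : Prop :=
  [/\ 2 <= i <= size T, BWTr T i.-1 != BWTr T i &
      (c == BWTr T i.-1) || (c == BWTr T i)].

Definition valid_text (sigma : nat) (T : seq nat) : Prop :=
  [/\ 2 <= size T,
      (forall j, 1 <= j <= size T -> 1 <= chr T j <= sigma),
      chr T 1 = 1,
      (forall j, 2 <= j <= size T -> chr T j != 1) &
      (forall a, 1 <= a <= sigma -> a \in T)].

(* Main.v *)
Require Import Defs.
From mathcomp Require Import all_boot zify.

Lemma lexle_refl s : lexle s s.
Proof. by elim: s => //= a s ->; rewrite eqxx orbT. Qed.

Lemma lexle_trans s t r : lexle s t -> lexle t r -> lexle s r.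
Proof.
elim: s t r => [//|a s IH] [|b t] [|c r] //=.
case/orP=> [ab|/andP[/eqP<- st]]; case/orP=> [bc|/andP[/eqP<- tr]].
- by rewrite (ltn_trans ab bc).
- by rewrite ab.
- by rewrite bc.
- by rewrite eqxx (IH _ _ st tr) orbT.
Qed.

Lemma lexle_total s t : lexle s t || lexle t s.
Proof.
elim: s t => [//|a s IH] [|b t] //=.
case: (ltngtP a b) => //= ->; by rewrite eqxx /= IH.
Qed.

Lemma lex_between (w a x b : seq nat) : prefix w a -> prefix w b -> lexle a x -> lexle x b -> prefix w x.
Proof.
elim: w a x b => [|h w IH] [|a0 a] [|x0 x] [|b0 b] //=; rewrite ?prefix0s ?prefix_cons //.
case/andP=> /eqP<- pa /andP[/eqP<- pb].
case/orP=> [hx|/andP[/eqP<- ax]]; case/orP=> [xh|/andP[/eqP xh xb]].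
- by move: (ltn_trans hx xh); rewrite ltnn.
- by move: hx; rewrite xh ltnn.
- by move: xh; rewrite ltnn.
- by rewrite eqxx (IH _ _ _ pa pb ax xb).
Qed.

Lemma lcp_prefix (w a b : seq nat) : prefix w a -> prefix w b -> size w <= lcp a b.
Proof.
elim: w a b => [|h w IH] [|a0 a] [|b0 b] //=; rewrite ?prefix_cons //.
case/andP=> /eqP<- pa /andP[/eqP<- pb]; rewrite eqxx /= ltnS; exact: (IH _ _ pa pb).
Qed.

Lemma lcp_size a b : lcp a b <= size a.
Proof. elim: a b => [|x a IH] [|y b] //=; case: ifP => //= _; rewrite ltnS; exact: IH. Qed.

Lemma walk (g : nat -> bool) p d : g p != g (p + d) ->
  exists i, p < i <= p + d /\ g i.-1 != g i.
Proof.
elim: d p => [|d IH] p; first by rewrite addn0 eqxx.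
move=> H; case E: (g p == g p.+1).
- have: g p.+1 != g (p.+1 + d) by rewrite -(eqP E) addSnnS.
  case/IH=> i [/andP[h1 h2] h3]; exists i; split=> //; apply/andP; split; lia.
- exists p.+1; split; last by rewrite /= E.
  apply/andP; split; lia.
Qed.

Lemma suffix_drop_le (u Y : seq nat) j : suffix u Y -> j <= size Y - size u -> suffix u (drop j Y).
Proof.
case/suffixP=> Y' -> hj; apply/suffixP; exists (drop j Y').
rewrite size_cat in hj; rewrite drop_cat; case: ltnP => h; first by [].
rewrite addnK in hj; have -> : j - size Y' = 0 by apply/eqP; rewrite subn_eq0; apply: leq_trans hj _.
by rewrite drop0 (_ : drop j Y' = [::]) // drop_oversize //; lia.
Qed.

Lemma SAr_perm T : perm_eq (SAr_list T) (iota 1 (size T)).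
Proof. by rewrite /SAr_list perm_sort perm_refl. Qed.

Lemma size_SAr T : size (SAr_list T) = size T.
Proof. by rewrite (perm_size (SAr_perm T)) size_iota. Qed.

Lemma SAr_range T i : 1 <= i <= size T -> 1 <= SAr T i <= size T.
Proof.
move=> hi; have: SAr T i \in SAr_list T.
  by rewrite /SAr; apply: mem_nth; rewrite size_SAr; lia.
rewrite (perm_mem (SAr_perm T)) mem_iota; lia.
Qed.

Lemma text_range T i : 1 <= i <= size T -> 1 <= text T i <= size T.
Proof. move/SAr_range; rewrite /text; lia. Qed.

Lemma row_of T t : 1 <= t <= size T -> exists i, 1 <= i <= size T /\ text T i = t.
Proof.
move=> ht; set p := size T - t + 1.
have hp : p \in SAr_list T by rewrite (perm_mem (SAr_perm T)) mem_iota; lia.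
exists (index p (SAr_list T)).+1; split.
  by move: hp; rewrite -index_mem size_SAr; lia.
by rewrite /text /SAr /= nth_index //; lia.
Qed.

Lemma rsuf_text T i : 1 <= i <= size T -> rsuf T (SAr T i) = rev (take (text T i) T).
Proof.
move/SAr_range=> h; rewrite /rsuf /Trev drop_rev /text; congr (rev (take _ _)); lia.
Qed.

Lemma BWT_text T i : 1 <= i <= size T ->
  BWTr T i = if text T i < size T then chr T (text T i).+1 else chr T 1.
Proof.
move/SAr_range=> h; rewrite /BWTr /text /chr /Trev.
case: ltnP => hp.
  rewrite ifT; last lia.
  rewrite nth_rev; last lia.
  congr nth; lia.
rewrite ifF; last lia.
rewrite nth_rev; last lia.
congr nth; lia.
Qed.

Lemma sorted_rows T i j : 1 <= i -> i <= j -> j <= size T ->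
  lexle (rsuf T (SAr T i)) (rsuf T (SAr T j)).
Proof.
move=> h1 h2 h3.
pose R := fun p q => lexle (rsuf T p) (rsuf T q).
have tr : transitive R by move=> y x z; apply: lexle_trans.
have rf : reflexive R by move=> x; apply: lexle_refl.
have to : total R by move=> x y; apply: lexle_total.
have := sorted_leq_nth tr rf 0 (sort_sorted to (iota 1 (size T))).
move=> /(_ i.-1 j.-1); rewrite !inE -/(SAr_list T) size_SAr; apply; lia.
Qed.

Theorem mainTheorem4 (sigma : nat) (T : seq nat) :
  valid_text sigma T ->
  forall (c k l : nat),
    1 <= c <= sigma ->
    1 <= k <= l -> l <= size T ->
    right_maximal sigma T (substr T k l.-1) ->
    chr T l = c ->
    exists i i' : nat,
      [/\ run_break T c i,
          i' = i.-1 \/ i' = i,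
          BWTr T i' = c &
          suffix (substr T k l)
                 (rcons (substr T (text T i' - LCPr T i + 1) (text T i'))
                        (BWTr T i'))].
Proof.
move=> [Hn Hch H1 Hne1 Hall] c k l Hc /andP[Hk Hkl] Hln Hrm Hcl.
set u := substr T k l.-1 in Hrm *.
set n := size T in Hn Hln Hch Hne1 *.
pose Q i := suffix u (take (text T i) T).
have Hl1 : l = 1 -> u = [::].
  by move=> el; rewrite /u el /substr /= take0 drop_oversize.
have Hrow : exists p, [/\ 1 <= p <= n, Q p & BWTr T p = c].
  case: (ltnP 1 l) => Hl.
  - have [p [hp hpt]] := row_of T (l.-1) ltac:(lia).
    exists p; split => //.
      by rewrite /Q hpt /u /substr suffix_drop.
    by rewrite BWT_text // hpt ifT ?prednK //; lia.
  - have el : l = 1 by lia.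
    have [p [hp hpt]] := row_of T (n) ltac:(lia).
    exists p; split => //.
      by rewrite /Q (Hl1 el) suffix0s.
    by rewrite BWT_text // hpt ltnn H1 -Hcl el H1.
have Hother : exists q, [/\ 1 <= q <= n, Q q & BWTr T q != c].
  have row1 : c != 1 -> (u = [::] \/ suffix u T) -> exists q, [/\ 1 <= q <= n, Q q & BWTr T q != c].
    move=> hc hu; have [p [hp hpt]] := row_of T (n) ltac:(lia).
    exists p; split => //.
      rewrite /Q hpt take_size; case: hu => [->|//]; exact: suffix0s.
    by rewrite BWT_text // hpt ltnn H1 eq_sym.
  case: (eqVneq c 1) => hc.
  - have el : l = 1.
      case: (ltnP 1 l) => hl; last lia.
      by move: (Hne1 l ltac:(lia)); rewrite Hcl hc eqxx.
    have [p [hp hpt]] := row_of T (n.-1) ltac:(lia).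
    exists p; split => //.
      by rewrite /Q (Hl1 el) suffix0s.
    rewrite BWT_text // hpt ifT; last lia. rewrite prednK; last lia. rewrite hc; apply: Hne1; lia.
  - case: Hrm => [suf|[a [b [Ha Hb Hab Hia Hib]]]]; first by apply: row1 => //; right.
    have [x [hx hix]] : exists x, x != c /\ infix (rcons u x) T.
      case: (eqVneq a c) => hac; last by exists a.
      by exists b; split => //; rewrite -hac eq_sym.
    case/infixP: hix => s1 [s2 eT].
    have eT' : T = (s1 ++ u) ++ x :: s2 by rewrite eT -cats1 -!catA.
    case hj: (size s1 + size u == 0).
      apply: row1 => //; left; apply/eqP; rewrite -size_eq0; move: hj; rewrite addn_eq0 ; by case/andP.
    have hjn : size s1 + size u < n by rewrite /n eT' size_cat /= size_cat; lia.
    have hjr : 1 <= size s1 + size u <= n by apply/andP; split; [rewrite lt0n hj | exact: ltnW hjn].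
    have [p [hp hpt]] := row_of T (size s1 + size u) hjr.
    exists p; split => //.
      rewrite /Q hpt eT' -(size_cat s1 u) take_size_cat //.
      by apply: suffix_catr; apply: suffix_refl.
    rewrite BWT_text // hpt ifT // /chr /= eT' nth_cat size_cat ltnn subnn /=.
    exact: hx.
have Qpre : forall i, 1 <= i <= n -> Q i = prefix (rev u) (rsuf T (SAr T i)).
  by move=> i hi; rewrite rsuf_text // prefix_rev.
case: Hrow => p [hp Qp Bp]; case: Hother => q [hq Qq Bq].
pose lo := minn p q; pose hi := maxn p q.
have [Qlo Qhi] : Q lo /\ Q hi.
  by rewrite /lo /hi; case: (leqP p q).
have Hlohi : 1 <= lo /\ lo <= hi /\ hi <= n by rewrite /lo /hi; lia.
have Qmid : forall r, lo <= r <= hi -> Q r.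
  move=> r hr; rewrite Qpre; last lia.
  apply: (lex_between _ (rsuf T (SAr T lo)) _ (rsuf T (SAr T hi))).
  - by rewrite -Qpre //; lia.
  - by rewrite -Qpre //; lia.
  - apply: sorted_rows; lia.
  - apply: sorted_rows; lia.
pose g i := BWTr T i == c.
have hg : g lo != g (lo + (hi - lo)).
  rewrite subnKC; last lia.
  rewrite /g /lo /hi; case: (leqP p q) => h.
    by rewrite Bp eqxx eq_sym (negbTE Bq).
  by rewrite Bp eqxx (negbTE Bq).
case: (walk _ _ _ hg) => i [hii hgi].
rewrite subnKC in hii; last lia.
have Qi1 : Q i.-1 by apply: Qmid; lia.
have Qi : Q i by apply: Qmid; lia.
have hL : size u <= LCPr T i.
  rewrite /LCPr ifF; last lia.
  rewrite -(size_rev u); apply: lcp_prefix; rewrite -Qpre //; lia.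
have fin : forall j, 1 <= j <= n -> Q j -> BWTr T j = c ->
    suffix (substr T k l) (rcons (substr T (text T j - LCPr T i + 1) (text T j)) (BWTr T j)).
  move=> j hj Qj Bj.
  have -> : substr T k l = rcons u c.
    rewrite /u /substr.
    have hl : l = l.-1.+1 by move: Hk Hkl; clear; lia.
    rewrite {1}hl (take_nth 0); last by move: Hk Hkl Hln; clear; lia.
    rewrite drop_rcons; last by rewrite size_takel; move: Hk Hkl Hln; clear; lia.
    by rewrite -Hcl /chr.
  rewrite Bj suffix_rcons eqxx /= addn1 /=.
  apply: (suffix_drop_le _ _ _ Qj).
  have ht := text_range _ _ hj; rewrite size_takel; last by case/andP: ht.
  move: hL ht; rewrite /=; move: (size u) (LCPr T i) (text T j) => a b t; clear; lia.
case E: (g i.-1).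
- have Bi1 : BWTr T i.-1 = c by apply/eqP.
  have Bi : BWTr T i != c by move: hgi; rewrite E /g; case: (BWTr T i == c).
  exists i, i.-1; split.
  + split; first lia.
      by rewrite Bi1 eq_sym.
    by rewrite Bi1 eqxx.
  + by left.
  + exact: Bi1.
  + apply: fin => //; lia.
- have Bi : BWTr T i = c by move: hgi; rewrite E /g; case: (BWTr T i =P c).
  have Bi1 : BWTr T i.-1 != c by rewrite /g in E; rewrite E.
  exists i, i; split.
  + split; first lia.
      by rewrite Bi.
    by rewrite Bi eqxx orbT.
  + by right.
  + exact: Bi.
  + apply: fin => //; lia.
Qed.
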